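(* Let $G$ be a connected graph of order $n\geq 2$ and let $H$ be a graph with $k\geq 1$ connected components $H_1,\dots,H_k$. Let $c$ be a locating coloring of $G\odot H$. Then for every $u\in V(G)$ and every $t\in\{1,\dots,k\}$, the vertices of $H_t(u)$ receive at least $\chi_L(H_t+K_1)-1$ distinct colors under $c$, i.e. $H_t(u)$ meets at least $\chi_L(H_t+K_1)-1$ color classes of $c$.
   Context: All graphs are finite and simple. A $k$-coloring of a connected graph $G$ is a map $c:V(G)\to\{1,\dots,k\}$ with $c(u)\neq c(v)$ for adjacent $u,v$; it induces the partition $\Pi=\{C_1,\dots,C_k\}$ into color classes $C_i=c^{-1}(i)$. The color code of $v$ is $c_\Pi(v)=(d(v,C_1),\dots,d(v,C_k))$ with $d(v,C_i)=\min\{d(v,x): x\in C_i\}$ (graph distance). $c$ is a locating coloring if distinct vertices have distinct color codes; the locating-chromatic number $\chi_L(G)$ is the least $k$ for which a locating $k$-coloring exists. The corona product $G\odot H$ of a graph $G$ with vertex set $\{a_1,\dots,a_n\}$ and a graph $H$ is obtained from one copy of $G$ and $n$ disjoint copies of $H$ by joining $a_i$ to every vertex of the $i$-th copy of $H$. Write $(u)$ for the vertex of $G\odot H$ corresponding to $u\in V(G)$ and $(u,v)$, $v\in V(H)$, for the vertices of the copy of $H$ attached to $(u)$; $H(u)=\{(u,v):v\in V(H)\}$ and $H_t(u)=\{(u,v): v\in V(H_t)\}$. For a graph $F$, $F+K_1$ denotes the join of $F$ with a single new vertex adjacent to all vertices of $F$. *)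

(* Defs.v *)
From mathcomp Require Import all_boot.
Set Implicit Arguments. Unset Strict Implicit. Unset Printing Implicit Defensive.

Definition simple_graph (T : finType) (e : rel T) : Prop :=
  symmetric e /\ irreflexive e.

Definition connected_graph (T : finType) (e : rel T) : Prop :=
  forall x y : T, connect e x y.

Fixpoint ball (T : finType) (e : rel T) (u : T) (n : nat) : {set T} :=
  match n with
  | 0 => [set u]
  | n'.+1 => ball e u n' :|: [set y | [exists x in ball e u n', e x y]]
  end.

(* d(u, C) = min { d(u,x) : x in C }; equals #|T| (a sentinel exceeding every
   finite distance) when no vertex of C is reachable from u. *)
Definition setdist (T : finType) (e : rel T) (u : T) (C : {set T}) : nat :=
  find (fun n => [exists y in C, y \in ball e u n]) (iota 0 #|T|).

Definition color_class (T : finType) (k : nat) (c : T -> 'I_k) (i : 'I_k) : {set T} :=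
  [set x | c x == i].

Definition color_code (T : finType) (e : rel T) (k : nat) (c : T -> 'I_k) (v : T)
  : {ffun 'I_k -> nat} := [ffun i => setdist e v (color_class c i)].

Definition locating_coloring (T : finType) (e : rel T) (k : nat) (c : T -> 'I_k) : bool :=
  [&& [forall u, forall v, e u v ==> (c u != c v)],
      [forall i : 'I_k, exists v, c v == i] &
      [forall u, forall v, (color_code e c u == color_code e c v) ==> (u == v)]].

(* chi_L(G) = least k admitting a locating k-coloring (one always exists with
   k = #|T| colors, so the search range suffices). *)
Definition chiL (T : finType) (e : rel T) : nat :=
  find (fun k => [exists c : {ffun T -> 'I_k}, locating_coloring e c]) (iota 0 #|T|.+1).

(* Corona product G ⊙ H: vertices inl u = (u), inr (u, v) = (u, v). *)
Definition corona_rel (TG TH : finType) (eG : rel TG) (eH : rel TH)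
  : rel (TG + (TG * TH)) :=
  fun x y =>
    match x, y with
    | inl a, inl b => eG a b
    | inr (a, v), inr (b, w) => (a == b) && eH v w
    | inl a, inr (b, _) => a == b
    | inr (a, _), inl b => a == b
    end.

(* F + K_1 for the subgraph of H induced by a vertex set S: new vertex None. *)
Definition join_K1_rel (TH : finType) (eH : rel TH) (S : {set TH})
  : rel (option {x : TH | x \in S}) :=
  fun x y =>
    match x, y with
    | Some a, Some b => eH (val a) (val b)
    | None, Some _ => true
    | Some _, None => true
    | None, None => false
    end.

Definition component (TH : finType) (eH : rel TH) (S : {set TH}) : Prop :=
  exists x : TH, S = [set y | connect eH x y].
Arguments join_K1_rel {TH} eH S _ _.

(* Main.v *)
Require Import Defs.
From mathcomp Require Import all_boot.
Set Implicit Arguments. Unset Strict Implicit. Unset Printing Implicit Defensive.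

Lemma ball0 (T : finType) (e : rel T) v y : (y \in ball e v 0) = (y == v).
Proof. by rewrite /= inE. Qed.

Lemma ball1 (T : finType) (e : rel T) v y : (y \in ball e v 1) = (y == v) || e v y.
Proof.
rewrite /= !inE; congr orb; apply/existsP/idP => [[x /andP[]]|h].
  by rewrite inE => /eqP->.
by exists v; rewrite inE eqxx.
Qed.

Lemma ballS (T : finType) (e : rel T) v n y : (y \in ball e v n.+1) =
  (y \in ball e v n) || [exists x, (x \in ball e v n) && e x y].
Proof. by rewrite /= !inE. Qed.

Lemma ball1_sub (T : finType) (e : rel T) v n : ball e v 1 \subset ball e v n.+1.
Proof.
elim: n => [|n IH] //; apply: subset_trans IH _; rewrite [ball e v n.+2]/=; exact: subsetUl.
Qed.

Lemma find_iota_eq (P Q : pred nat) N : 1 < N -> find P (iota 0 N) = find Q (iota 0 N) ->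
  P 0 = Q 0 /\ (P 0 || P 1) = (Q 0 || Q 1).
Proof.
case: N => [|[|n]] // _ /=.
by case: (P 0); case: (Q 0) => //=; case: (P 1); case: (Q 1).
Qed.

Lemma find_le (P : pred nat) N m : m < N -> P m -> find P (iota 0 N) <= m.
Proof.
move=> mN Pm; rewrite leqNgt; apply/negP => h.
by have := before_find 0 h; rewrite nth_iota // add0n Pm.
Qed.

Lemma corona_ball (TG TH : finType) (eG : rel TG) (eH : rel TH) u x n z :
  (z \in ball (corona_rel eG eH) (inr (u, x)) n.+1) =
  [|| z == inr (u, x), corona_rel eG eH (inr (u, x)) z |
      z \in ball (corona_rel eG eH) (inl u) n].
Proof.
set E := corona_rel eG eH.
have nb : forall w z, E (inr (u, x)) w -> E w z -> z \in ball E (inl u) 1.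
  move=> [a|[a y]] [b|[b y']] //=; rewrite ball1 /=.
  - by move=> /eqP<- ->; rewrite orbT.
  - by move=> /eqP<- /eqP<-; rewrite eqxx.
  - by move=> /andP[/eqP<- _] /eqP<-; rewrite eqxx.
  - by move=> /andP[/eqP<- _] /andP[/eqP<- _]; rewrite eqxx.
elim: n z => [|n IH] z.
  rewrite ball1 ball0; case: eqP => //= _.
  case: z => [a|[a y]]; apply/idP/idP => [->//|/orP[//|/eqP]] //.
  by case=> ->.
rewrite ballS IH; apply/idP/idP.
  case/orP => [/or3P[->|->|h]|/existsP[w /andP[]]]; rewrite ?orbT //.
    by rewrite ballS h !orbT.
  rewrite IH.
  case/or3P => [/eqP->|Ew|wB] Ewz.
  - by rewrite Ewz orbT.
  - by rewrite (subsetP (ball1_sub E (inl u) n) _ (nb _ _ Ew Ewz)) !orbT.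
  - by rewrite ballS; apply/orP; right; apply/orP; right; apply/orP; right; apply/existsP; exists w; rewrite wB.
case/or3P => [->//|->|]; first by rewrite orbT.
rewrite ballS.
case/orP => [->|/existsP[w /andP[wB Ewz]]]; first by rewrite !orbT.
apply/orP; right; apply/existsP; exists w; rewrite IH wB Ewz !orbT //.
Qed.

Lemma ex_ball0 (T : finType) (e : rel T) k (f : T -> 'I_k) v j :
  [exists y in color_class f j, y \in ball e v 0] = (f v == j).
Proof.
apply/existsP/idP => [[y /andP[]]|h]; first by rewrite inE ball0 => /eqP fy /eqP<-; rewrite fy.
by exists v; rewrite inE ball0 h eqxx.
Qed.

Lemma ex_ball1 (T : finType) (e : rel T) k (f : T -> 'I_k) v j :
  [exists y in color_class f j, y \in ball e v 1] = (f v == j) || [exists y, e v y && (f y == j)].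
Proof.
apply/existsP/idP => [[y /andP[]]|].
  rewrite inE ball1 => fy /orP[/eqP<-|evy]; first by rewrite fy.
  by apply/orP; right; apply/existsP; exists y; rewrite evy.
case/orP => [h|/existsP[y /andP[evy fy]]].
  by exists v; rewrite inE ball1 h eqxx.
by exists y; rewrite inE ball1 fy evy orbT.
Qed.

Lemma corona_ex (TG TH : finType) (eG : rel TG) (eH : rel TH) k (c : _ -> 'I_k) u x n i :
  [exists z in color_class c i, z \in ball (corona_rel eG eH) (inr (u, x)) n.+1] =
  [|| c (inr (u, x)) == i, [exists z, corona_rel eG eH (inr (u, x)) z && (c z == i)] |
      [exists z in color_class c i, z \in ball (corona_rel eG eH) (inl u) n]].
Proof.
apply/existsP/idP => [[z /andP[]]|].
  rewrite inE corona_ball => /eqP cz /or3P[/eqP zv|ez|zb].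
  - by rewrite -zv cz eqxx.
  - by apply/or3P; apply: Or32; apply/existsP; exists z; rewrite ez cz eqxx.
  - by apply/or3P; apply: Or33; apply/existsP; exists z; rewrite inE cz eqxx zb.
case/or3P => [h|/existsP[z /andP[ez cz]]|/existsP[z /andP[cz zb]]].
- by exists (inr (u, x)); rewrite inE corona_ball h eqxx.
- by exists z; rewrite inE corona_ball cz ez orbT.
- by exists z; rewrite cz corona_ball zb !orbT.
Qed.

From Stdlib Require Import FunctionalExtensionality.

Theorem lemma2 (TG TH : finType) (eG : rel TG) (eH : rel TH) (k : nat)
  (c : TG + (TG * TH) -> 'I_k) :
  simple_graph eG -> connected_graph eG -> 2 <= #|TG| ->
  simple_graph eH -> 1 <= #|TH| ->
  locating_coloring (corona_rel eG eH) c ->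
  forall (u : TG) (S : {set TH}), component eH S ->
  chiL (join_K1_rel eH S) - 1 <= #|(fun x : TH => c (inr (u, x))) @: S|.
Proof.
move=> sG cG cardG sH cardH loc u S [x0 defS].
have hS : forall a b, a \in S -> eH a b -> b \in S.
  move=> a b; rewrite defS !inE => ca ab; exact: connect_trans ca (connect1 ab).
move/and3P: loc => [/forallP proper _ /forallP inj].
set E := corona_rel eG eH.
have pr : forall x y, E x y -> c x != c y.
  by move=> x y; move/forallP: (proper x) => /(_ y) /implyP.
set e' := join_K1_rel eH S.
pose T' := option {x : TH | x \in S}.
pose cp (w : T') : 'I_k := if w is Some a then c (inr (u, val a)) else c (inl u).
pose A := cp @: [set: T'].
have HA0 : cp None \in A by apply: imset_f.
pose cpp (w : T') := enum_rank_in HA0 (cp w).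
have cpA : forall w, cp w \in A by move=> w; apply: imset_f.
have eqcol : forall w i, (cp w == i) = if i \in A then cpp w == enum_rank_in HA0 i else false.
  move=> w i; case: ifP => iA.
    apply/eqP/eqP => [h|h]; first by rewrite /cpp h.
    by rewrite -(enum_rankK_in HA0 iA) -h enum_rankK_in.
  by apply/eqP => h; rewrite -h cpA in iA.
have cppinj : forall v w, cpp v = cpp w -> cp v = cp w.
  by move=> v w h; rewrite -(enum_rankK_in HA0 (cpA v)) -/(cpp v) h /cpp enum_rankK_in.
have nbr : forall (a : {x : TH | x \in S}) i,
    [exists z, E (inr (u, val a)) z && (c z == i)] = [exists w, e' (Some a) w && (cp w == i)].
  move=> a i; apply/existsP/existsP => [[[b|[b y]] /andP[]]|[[b|] /andP[]]].
  - by move=> /eqP<- ci; exists None.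
  - move=> /andP[/eqP<- ay] ci; exists (Some (exist _ y (hS _ _ (valP a) ay))).
    by rewrite /e' /= ay.
  - by move=> ab ci; exists (inr (u, val b)); apply/andP; split; [rewrite /E /= eqxx; exact: ab|exact: ci].
  - by move=> _ ci; exists (inl u); apply/andP; split; [rewrite /E /= eqxx|exact: ci].
have M1 : forall (a : {x : TH | x \in S}) i,
    (cp (Some a) == i) || [exists w, e' (Some a) w && (cp w == i)] =
    if i \in A then (cpp (Some a) == enum_rank_in HA0 i) ||
       [exists w, e' (Some a) w && (cpp w == enum_rank_in HA0 i)] else false.
  move=> a i; rewrite eqcol; case: ifP => iA.
    by congr orb; apply: eq_existsb => w; rewrite eqcol iA.
  by apply/existsP => -[w]; rewrite eqcol iA andbF.
have x0S : x0 \in S by rewrite defS inE connect0.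
have card2 : 1 < #|{: T'}|.
  by rewrite card_option ltnS; apply/card_gt0P; exists (exist _ x0 x0S).
have locp : locating_coloring e' cpp.
  apply/and3P; split.
  - apply/forallP => v; apply/forallP => w; apply/implyP => evw; apply/eqP => /cppinj; apply/eqP.
    case: v w evw => [a|] [b|] // evw.
    + by apply: pr; rewrite /E /= eqxx; exact: evw.
    + by apply: pr; rewrite /E /= eqxx.
    + by apply: pr; rewrite /E /= eqxx.
  - apply/forallP => j; apply/existsP.
    have := enum_valP j; case/imsetP => w _ hw; exists w.
    by rewrite /cpp -hw enum_valK_in.
  - apply/forallP => v; apply/forallP => w; apply/implyP => /eqP/ffunP hc.
    have H : forall j, (cpp v == j) = (cpp w == j) /\
        ((cpp v == j) || [exists y, e' v y && (cpp y == j)]) =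
        ((cpp w == j) || [exists y, e' w y && (cpp y == j)]).
      move=> j; move: (hc j); rewrite !ffunE /setdist => /(find_iota_eq card2).
      by rewrite !ex_ball0 !ex_ball1 !orbA !orbb.
    case: v w H {hc} => [a|] [b|] H.
    + apply/eqP; congr Some; apply: val_inj.
      have := inj (inr (u, val a)); move/forallP/(_ (inr (u, val b)))/implyP => h.
      suff /h/eqP[] : color_code E c (inr (u, val a)) == color_code E c (inr (u, val b)) by [].
      apply/eqP/ffunP => i; rewrite !ffunE /setdist; apply: eq_find => -[|n]; cbv beta.
        rewrite !ex_ball0 -[c (inr (u, val a)) == i]/(cp (Some a) == i).
        rewrite -[c (inr (u, val b)) == i]/(cp (Some b) == i) !eqcol.
        by case: ifP => // _; exact: (H _).1.
      rewrite !corona_ex !nbr !orbA -[c (inr (u, val a)) == i]/(cp (Some a) == i).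
      rewrite -[c (inr (u, val b)) == i]/(cp (Some b) == i) !M1.
      by case: ifP => // _; rewrite (H _).2.
    + have := (H (cpp None)).1; rewrite eqxx => /eqP/cppinj/eqP.
      by rewrite (negbTE (pr (inr (u, val a)) (inl u) _)) // /E /= eqxx.
    + have := (H (cpp None)).1; rewrite eqxx => /esym/eqP/cppinj/eqP.
      by rewrite (negbTE (pr (inr (u, val b)) (inl u) _)) // /E /= eqxx.
    + by [].
have chiLA : chiL e' <= #|A|.
  rewrite /chiL; apply: find_le.
    by rewrite ltnS; apply: leq_trans (leq_imset_card _ _) _; exact: max_card.
  apply/existsP; exists [ffun w => cpp w].
  rewrite (_ : fun_of_fin _ = cpp) //.
  by apply: functional_extensionality => w; rewrite ffunE.
have AU : A \subset c (inl u) |: ((fun x : TH => c (inr (u, x))) @: S).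
  apply/subsetP => i /imsetP[[a|] _ ->]; rewrite !inE ?eqxx //.
  by apply/orP; right; apply: imset_f; exact: valP.
have := subset_leq_card AU; rewrite cardsU1 => h.
rewrite leq_subLR; apply: leq_trans chiLA (leq_trans h _).
by rewrite leq_add2r leq_b1.
Qed.
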